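(* Consider the following MIMO flat-fading model. Fix integers $l_{\mathrm t},l_{\mathrm r},n\ge 1$ and a known pilot matrix $S=[s_{t,k}]\in\mathbb{C}^{n\times l_{\mathrm t}}$. Let $\vec{\mathbf h}\in\mathbb{C}^{l_{\mathrm r}l_{\mathrm t}}$ (entries $h_{r,t}$) be circularly symmetric complex Gaussian $\mathcal{CN}(\vec\mu_{\vec{\mathbf h}},\Sigma_{\vec{\mathbf h}})$ with $\Sigma_{\vec{\mathbf h}}$ positive definite, let $\mathbf f_\delta\sim\mathcal N(\mu_{\mathbf f_\delta},\sigma_{\mathbf f_\delta}^2)$ be real, let the noise entries $n_{r,k}$ be i.i.d. $\mathcal{CN}(0,1)$, with $\vec{\mathbf h},\mathbf f_\delta,\vec{\mathbf n}$ mutually independent, and observe $\vec{\mathbf y}=\grave X(\mathbf f_\delta)\vec{\mathbf h}+\vec{\mathbf n}$, i.e. $y_{r,k}=e^{j2\pi \mathbf f_\delta (k-1)}\sum_{t=1}^{l_{\mathrm t}}s_{t,k}h_{r,t}+n_{r,k}$. Then for every observation $\vec y\in\mathbb{C}^{nl_{\mathrm r}}$, $$\arg\max_{f_\delta\in\mathbb R} f_{\vec{\mathbf y}|\mathbf f_\delta}(\vec y\,|\,f_\delta)\,f_{\mathbf f_\delta}(f_\delta)=\arg\max_{f_\delta\in\mathbb R} g(\vec y,f_\delta),$$ where $$g(\vec y,f_\delta)=2\,\mathrm{Re}\big[\langle \grave X(f_\delta)^\dagger\vec y,\vec b\rangle\big]+\big(\grave X(f_\delta)^\dagger\vec y\big)^\dagger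 A\big(\grave X(f_\delta)^\dagger\vec y\big)-\tfrac12\sigma_{\mathbf f_\delta}^{-2}\,|f_\delta-\mu_{\mathbf f_\delta}|^2 ,$$ with $A=(\grave S^\dagger\grave S+\Sigma_{\vec{\mathbf h}}^{-1})^{-1}$ (which equals $(\Sigma_{\vec{\mathbf h}}^{-1}+\frac{n\rho}{l_{\mathrm t}}I)^{-1}$ when $S^\dagger S=\frac{n\rho}{l_{\mathrm t}}I_{l_{\mathrm t}}$) and $\vec b=(I-A\grave X(f_\delta)^\dagger\grave X(f_\delta))\vec\mu_{\vec{\mathbf h}}=(I-A\grave S^\dagger\grave S)\vec\mu_{\vec{\mathbf h}}$; $A$ and $\vec b$ do not depend on $f_\delta$. Moreover, the maximum likelihood estimator $\arg\max_{f_\delta} f_{\vec{\mathbf y}|\mathbf f_\delta}(\vec y|f_\delta)$ is obtained by maximizing the same function $g$ with $\sigma_{\mathbf f_\delta}^{-2}$ set to $0$.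
   Context: Notation: $l_{\mathrm t}$ transmit antennas, $l_{\mathrm r}$ receive antennas, $n$ symbol times. $\vec{\mathbf h}$ stacks $h_{r,t}$ (channel from transmit antenna $t$ to receive antenna $r$) with $h_{r,t}$ in position $(r-1)l_{\mathrm t}+t$; $\vec{\mathbf y}$ and $\vec{\mathbf n}$ stack $y_{r,k},n_{r,k}$ with index $(r,k)$ in position $(r-1)n+k$. $\rho=\frac1n\mathrm{Tr}(S^\dagger S)$. $F(f)=\mathrm{diag}\big(e^{j2\pi f(k-1)}\big)_{k=1,\dots,n}$, $X(f)=F(f)S$, $\grave X(f)=I_{l_{\mathrm r}}\otimes X(f)$ (block diagonal with $l_{\mathrm r}$ copies of $X(f)$), $\grave S=I_{l_{\mathrm r}}\otimes S$. $f_{\vec{\mathbf y}|\mathbf f_\delta}$ is the conditional density of $\vec{\mathbf y}$ given $\mathbf f_\delta$ and $f_{\mathbf f_\delta}$ the Gaussian prior density of $\mathbf f_\delta$. $\langle u,v\rangle=v^\dagger u$; $\dagger$ denotes conjugate transpose. *)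

(* Defs.v *)
From HB Require Import structures.
From mathcomp Require Import all_boot all_order all_algebra.
From mathcomp Require Import all_classical all_reals all_analysis.
From mathcomp Require Import complex mxtens.
Unset Printing Implicit Defensive.
Import Order.TTheory GRing.Theory Num.Theory.
Local Open Scope ring_scope.
Local Open Scope complex_scope.

Section Model.
Context {R : realType}.
Notation C := (R[i]).

Definition ctr {m p : nat} (M : 'M[C]_(m, p)) : 'M[C]_(p, m) :=
  (map_mx (fun z : C => z^*) M)^T.

Definition herm_pd {N : nat} (M : 'M[C]_N) : Prop :=
  ctr M = M /\
  forall v : 'cV[C]_N, v != 0 -> 0 < complex.Re ((ctr v *m M *m v) 0 0).

(* F(f) = diag(e^{j 2 pi f (k-1)})_{k=1..n}; here k : 'I_n is 0-based, k = (k_paper - 1) *)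
Definition Fmx (n : nat) (f : R) : 'M[C]_n :=
  diag_mx (\row_(k < n) (cos (2 * pi * f * k%:R) +i* sin (2 * pi * f * k%:R))).

Definition Xmx {n lt : nat} (S : 'M[C]_(n, lt)) (f : R) : 'M[C]_(n, lt) :=
  Fmx n f *m S.

(* X-grave(f) = I_{lr} (x) X(f): block diagonal; row index (r,k) at r*n+k,
   column index (r,t) at r*lt+t (0-based), matching the stacking of y and h *)
Definition Xgr (lr : nat) {n lt : nat} (S : 'M[C]_(n, lt)) (f : R)
  : 'M[C]_(lr * n, lr * lt) := (1%:M : 'M[C]_lr) *t Xmx S f.

Definition Sgr (lr : nat) {n lt : nat} (S : 'M[C]_(n, lt))
  : 'M[C]_(lr * n, lr * lt) := (1%:M : 'M[C]_lr) *t S.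

Definition rho {n lt : nat} (S : 'M[C]_(n, lt)) : C := n%:R^-1 * \tr (ctr S *m S).

(* density of the circularly symmetric complex Gaussian CN(m, K) on C^N
   (K Hermitian positive definite, so det K is a positive real number) *)
Definition cn_pdf {N : nat} (m : 'cV[C]_N) (K : 'M[C]_N) (y : 'cV[C]_N) : R :=
  expR (- complex.Re ((ctr (y - m) *m invmx K *m (y - m)) 0 0))
  / (pi ^+ N * complex.Re (\det K)).

(* conditional density f_{y|f_delta}(y | f): given f_delta = f, the vector
   y = Xgr(f) h + n with h ~ CN(mu_h, Sigma_h) and n ~ CN(0, I) independent,
   hence y | f ~ CN(Xgr(f) mu_h, Xgr(f) Sigma_h Xgr(f)^dagger + I). *)
Definition lik (lr : nat) {n lt : nat} (S : 'M[C]_(n, lt))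
  (Sigma : 'M[C]_(lr * lt)) (mu : 'cV[C]_(lr * lt)) (f : R)
  (y : 'cV[C]_(lr * n)) : R :=
  cn_pdf (Xgr lr S f *m mu) (Xgr lr S f *m Sigma *m ctr (Xgr lr S f) + 1%:M) y.

Definition Amx (lr : nat) {n lt : nat} (S : 'M[C]_(n, lt))
  (Sigma : 'M[C]_(lr * lt)) : 'M[C]_(lr * lt) :=
  invmx (ctr (Sgr lr S) *m Sgr lr S + invmx Sigma).

Definition bvec (lr : nat) {n lt : nat} (S : 'M[C]_(n, lt))
  (Sigma : 'M[C]_(lr * lt)) (mu : 'cV[C]_(lr * lt)) : 'cV[C]_(lr * lt) :=
  (1%:M - Amx lr S Sigma *m ctr (Sgr lr S) *m Sgr lr S) *m mu.

(* g(y, f) with the weight [s2inv] playing the role of sigma_f^{-2};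
   <u, v> = v^dagger u; the quadratic form (X^dagger y)^dagger A (X^dagger y)
   is real since A is Hermitian, so its real part is taken. *)
Definition gfun (lr : nat) {n lt : nat} (S : 'M[C]_(n, lt))
  (Sigma : 'M[C]_(lr * lt)) (mu : 'cV[C]_(lr * lt)) (muf s2inv : R)
  (y : 'cV[C]_(lr * n)) (f : R) : R :=
  let v := ctr (Xgr lr S f) *m y in
  2 * complex.Re ((ctr (bvec lr S Sigma mu) *m v) 0 0)
  + complex.Re ((ctr v *m Amx lr S Sigma *m v) 0 0)
  - 2^-1 * s2inv * `|f - muf| ^+ 2.

End Model.

Definition argmax {R : realType} (F : R -> R) : set R :=
  [set x | forall x', F x' <= F x].

(* Main.v *)
Require Import Defs.
From HB Require Import structures.
From mathcomp Require Import all_boot all_order all_algebra.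
From mathcomp Require Import all_classical all_reals all_analysis.
From mathcomp Require Import complex mxtens polyrcf.
From mathcomp Require Import ring lra.
Import Order.TTheory GRing.Theory Num.Theory.
Local Open Scope ring_scope.
Local Open Scope complex_scope.
Set Implicit Arguments. Unset Strict Implicit.

Section Aux.
Variable R : realType.
Local Notation C := (R[i]).

Lemma ctrM m p q (A : 'M[C]_(m, p)) (B : 'M[C]_(p, q)) :
  ctr (A *m B) = ctr B *m ctr A.
Proof. by rewrite /ctr map_mxM trmx_mul. Qed.

Lemma ctrK m p (A : 'M[C]_(m, p)) : ctr (ctr A) = A.
Proof. by apply/matrixP => i j; rewrite !mxE conjcK. Qed.

Lemma ctrD m p (A B : 'M[C]_(m, p)) : ctr (A + B) = ctr A + ctr B.
Proof. by apply/matrixP => i j; rewrite !mxE rmorphD. Qed.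

Lemma ctrN m p (A : 'M[C]_(m, p)) : ctr (- A) = - ctr A.
Proof. by apply/matrixP => i j; rewrite !mxE rmorphN. Qed.

Lemma ctrB m p (A B : 'M[C]_(m, p)) : ctr (A - B) = ctr A - ctr B.
Proof. by rewrite ctrD ctrN. Qed.

Lemma ctr0 m p : ctr (0 : 'M[C]_(m, p)) = 0.
Proof. by apply/matrixP => i j; rewrite !mxE conjc0. Qed.

Lemma ctr_scalar m (a : C) : ctr (a%:M : 'M[C]_m) = (a^*)%:M.
Proof. by apply/matrixP => i j; rewrite !mxE rmorphMn /= eq_sym. Qed.

Lemma ctr1 m : ctr (1%:M : 'M[C]_m) = 1%:M.
Proof. by apply/matrixP => i j; rewrite !mxE eq_sym; case: (_ == _); rewrite ?conjc1 ?conjc0. Qed.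

Lemma ctr_inv m (A : 'M[C]_m) : ctr (invmx A) = invmx (ctr A).
Proof. by rewrite /ctr map_invmx trmx_inv. Qed.

Lemma ctr_tens m n p q (A : 'M[C]_(m, n)) (B : 'M[C]_(p, q)) :
  ctr (A *t B) = ctr A *t ctr B.
Proof. by rewrite /ctr map_mxT trmx_tens. Qed.

Lemma ctr11 (w : 'M[C]_1) : ctr w 0 0 = (w 0 0)^*.
Proof. by rewrite !mxE. Qed.

Lemma tens_scal m p (c : C) :
  (1%:M : 'M[C]_m) *t (c%:M : 'M[C]_p) = c%:M.
Proof.
apply/matrixP=> i j.
case: (mxtens_indexP i)=> i0 i1; case: (mxtens_indexP j)=> j0 j1.
rewrite tensmxE !mxE.
rewrite (inj_eq (can_inj (@mxtens_indexK _ _))) xpair_eqE.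
by case: eqP; case: eqP => _ _ /=; rewrite ?mul1r ?mul0r ?mulr0n.
Qed.

Lemma ReD (x y : C) : complex.Re (x + y) = complex.Re x + complex.Re y.
Proof. by case: x; case: y. Qed.
Lemma ReN (x : C) : complex.Re (- x) = - complex.Re x.
Proof. by case: x. Qed.
Lemma ReB (x y : C) : complex.Re (x - y) = complex.Re x - complex.Re y.
Proof. by rewrite ReD ReN. Qed.
Lemma ReJ (x : C) : complex.Re (x^*) = complex.Re x.
Proof. by case: x. Qed.
Lemma Re0 : complex.Re (0 : C) = 0.
Proof. by []. Qed.
Lemma Re_real (a : R) (x : C) : complex.Re (a%:C * x) = a * complex.Re x.
Proof. by case: x => ? ? /=; ring. Qed.
Lemma Re_realC (a : R) : complex.Re (a%:C) = a.
Proof. by []. Qed.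

Lemma e00D (A B : 'M[C]_1) : (A + B) 0 0 = A 0 0 + B 0 0.
Proof. by rewrite mxE. Qed.
Lemma e00N (A : 'M[C]_1) : (- A) 0 0 = - A 0 0.
Proof. by rewrite mxE. Qed.
Lemma e00B (A B : 'M[C]_1) : (A - B) 0 0 = A 0 0 - B 0 0.
Proof. by rewrite e00D e00N. Qed.

End Aux.


Section M.
Variable R : realType.
Local Notation C := (R[i]).

Lemma unit_cs (t : R) : (cos t +i* sin t) * (cos t +i* sin t)^* = 1 :> C.
Proof.
apply/eqP; rewrite eq_complex /=; apply/andP; split; apply/eqP.
  by rewrite -(cos2Dsin2 t); ring.
by ring.
Qed.

Lemma F_unit n f : Fmx n f *m ctr (Fmx n f) = 1%:M :> 'M[C]_n.
Proof.
apply/matrixP => i j; rewrite /Fmx mul_diag_mx !mxE eq_sym.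
case: eqP => [->|_]; first by rewrite !mulr1n unit_cs.
by rewrite !mulr0n conjc0 mulr0.
Qed.

Definition Fg lr n f : 'M[C]_(lr * n) := (1%:M : 'M[C]_lr) *t Fmx n f.

Lemma Fg_unit lr n f : Fg lr n f *m ctr (Fg lr n f) = 1%:M.
Proof. by rewrite /Fg ctr_tens ctr1 tensmx_mul mulmx1 F_unit tens_scal. Qed.

Lemma Fg_unit' lr n f : ctr (Fg lr n f) *m Fg lr n f = 1%:M.
Proof. exact/mulmx1C/Fg_unit. Qed.

Lemma Xgr_Fg lr n lt (S : 'M[C]_(n, lt)) f : Xgr lr S f = Fg lr n f *m Sgr lr S.
Proof. by rewrite /Xgr /Sgr /Xmx /Fg tensmx_mul mulmx1. Qed.

Lemma XtX lr n lt (S : 'M[C]_(n, lt)) f :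
  ctr (Xgr lr S f) *m Xgr lr S f = ctr (Sgr lr S) *m Sgr lr S.
Proof.
by rewrite Xgr_Fg ctrM mulmxA -(mulmxA (ctr (Sgr lr S))) Fg_unit' mulmx1.
Qed.

Lemma detK lr n lt (S : 'M[C]_(n, lt)) (Sigma : 'M[C]_(lr * lt)) f :
  \det (Xgr lr S f *m Sigma *m ctr (Xgr lr S f) + 1%:M)
  = \det (Sgr lr S *m Sigma *m ctr (Sgr lr S) + 1%:M).
Proof.
set F := Fg lr n f.
have -> : Xgr lr S f *m Sigma *m ctr (Xgr lr S f) + 1%:M
   = F *m (Sgr lr S *m Sigma *m ctr (Sgr lr S) + 1%:M) *m ctr F.
  rewrite Xgr_Fg ctrM mulmxDr mulmxDl mulmx1 Fg_unit !mulmxA.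
  by [].
by rewrite !det_mulmx mulrAC -det_mulmx Fg_unit det1 mul1r.
Qed.
End M.


Section P.
Variable R : realType.
Local Notation C := (R[i]).

Lemma normsq_ge0 N (w : 'cV[C]_N) : 0 <= (ctr w *m w) 0 0.
Proof.
rewrite mxE; apply: sumr_ge0 => j _; rewrite !mxE mulrC; exact: mulcJ_ge0.
Qed.

Lemma normsq_gt0 N (w : 'cV[C]_N) : w != 0 -> 0 < (ctr w *m w) 0 0.
Proof.
move=> wn0.
have [j wj] : exists j, w j 0 != 0.
  apply/existsP; apply: contraR wn0 => /existsPn H.
  apply/eqP/matrixP => i k; rewrite [k]ord1 mxE; exact/eqP/negbNE/H.
rewrite mxE (bigD1 j) //=.
have hj : 0 < ctr w 0 j * w j 0.
  rewrite !mxE mulrC lt_def mulcJ_ge0 andbT mulf_neq0 //.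
  by rewrite conjc_eq0.
apply: (lt_le_trans hj); rewrite lerDl; apply: sumr_ge0 => i _.
rewrite !mxE mulrC; exact: mulcJ_ge0.
Qed.

Lemma Re_ge0 (z : C) : 0 <= z -> 0 <= complex.Re z.
Proof. by rewrite lecE => /andP[]. Qed.

Lemma Re_gt0 (z : C) : 0 < z -> 0 < complex.Re z.
Proof. by rewrite ltcE => /andP[]. Qed.

Definition pdQ N (M : 'M[C]_N) :=
  forall u : 'cV[C]_N, u != 0 -> 0 < complex.Re ((ctr u *m M *m u) 0 0).

Arguments pdQ {N}.

Lemma pd_unit N (M : 'M[C]_N) : pdQ M -> M \in unitmx.
Proof.
move=> H; rewrite unitmxE unitfE; apply/negP => /det0P [v vn0 vM].
have un0 : ctr v != 0.
  apply: contra vn0 => /eqP u0; by rewrite -(ctrK v) u0 ctr0.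
have := H _ un0; rewrite ctrK vM mul0mx mxE.
by rewrite Re0 ltxx.
Qed.

Lemma quadM N K (B : 'M[C]_(K, N)) (M : 'M[C]_K) (u : 'cV[C]_N) :
  ctr u *m (ctr B *m M *m B) *m u = ctr (B *m u) *m M *m (B *m u).
Proof. by rewrite ctrM !mulmxA. Qed.

Lemma pd_inv N (M : 'M[C]_N) : ctr M = M -> pdQ M -> pdQ (invmx M).
Proof.
move=> hM H u un0.
have Mu := pd_unit H.
set w := invmx M *m u.
have wn0 : w != 0.
  by apply: contra un0 => /eqP w0; rewrite -(mulKVmx Mu u) -/w w0 mulmx0.
have -> : u = M *m w by rewrite /w mulKVmx.
rewrite ctrM hM -!mulmxA (mulmxA M) mulmxV // mul1mx mulmxA.
exact: H.
Qed.

Lemma psd_gram N K (B : 'M[C]_(K, N)) (u : 'cV[C]_N) :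
  0 <= complex.Re ((ctr u *m (ctr B *m B) *m u) 0 0).
Proof.
by rewrite -(mulmx1 (ctr B)) quadM mulmx1; apply/Re_ge0/normsq_ge0.
Qed.

Lemma psd_conj N K (B : 'M[C]_(K, N)) (M : 'M[C]_N) (u : 'cV[C]_K) :
  pdQ M -> 0 <= complex.Re ((ctr u *m (B *m M *m ctr B) *m u) 0 0).
Proof.
move=> H; rewrite -{1}(ctrK B) quadM.
have [->|nz] := eqVneq (ctr B *m u) 0.
  by rewrite mulmx0 mxE Re0.
exact/ltW/H.
Qed.

Lemma pdD N (M P : 'M[C]_N) :
  pdQ M -> (forall u : 'cV[C]_N, 0 <= complex.Re ((ctr u *m P *m u) 0 0)) -> pdQ (M + P).
Proof.
move=> HM HP u un0; rewrite mulmxDr mulmxDl e00D ReD.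
apply: (lt_le_trans (HM _ un0)); rewrite lerDl; exact: HP.
Qed.
End P.


Section D.
Variable R : realType.
Local Notation C := (R[i]).

Lemma char_poly_tr N (A : 'M[C]_N) : char_poly A^T = char_poly A.
Proof.
rewrite /char_poly -det_tr; congr (\det _); apply/matrixP => i j.
by rewrite !mxE eq_sym.
Qed.

Lemma char_poly_eval N (A : 'M[C]_N) (x : C) :
  (char_poly A).[x] = \det (x%:M - A).
Proof.
rewrite -horner_evalE /char_poly -det_map_mx; congr (\det _).
apply/matrixP => i j; rewrite !mxE /=.
by rewrite horner_evalE hornerD hornerN hornerMn hornerX hornerC.
Qed.

Lemma conj_real (x : C) : x^* = x -> ((complex.Re x)%:C = x).
Proof.
case: x => a b /eqP; rewrite eq_complex /= => /andP[_ /eqP hb].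
apply/eqP; rewrite eq_complex /= eqxx /=; apply/eqP; lra.
Qed.

Lemma det_pos N (M : 'M[C]_N) : ctr M = M ->
  (forall y : R, 0 < y -> (y%:C%:M + M) \in unitmx) ->
  0 < complex.Re (\det (1%:M + M)).
Proof.
move=> hM hU.
pose p := char_poly (- M).
have Hp x : p.[x] = \det (x%:M + M) by rewrite char_poly_eval opprK.
have Hreal : map_poly conjc p = p.
  rewrite map_char_poly -char_poly_tr; congr char_poly.
  by rewrite map_mxN -[in RHS]hM /ctr linearN.
pose r := map_poly (@complex.Re R) p.
have Hpr : p = map_poly (real_complex R) r.
  apply/polyP => i; rewrite coef_map /= coef_map_id0 //.
  apply/esym/conj_real.
  by rewrite -[in RHS]Hreal coef_map.
have Hev (y : R) : \det (y%:C%:M + M) = (r.[y])%:C.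
  by rewrite -Hp {1}Hpr horner_map.
have lr1 : lead_coef r = 1.
  have := char_poly_monic (- M); rewrite -/p qualifE /= => /eqP.
  by rewrite Hpr lead_coef_map => /(congr1 (@complex.Re R)).
have nr : {in `[1, +oo[, forall x, ~~ root r x}.
  move=> y; rewrite in_itv /= andbT => y1.
  have := hU y (lt_le_trans ltr01 y1); rewrite unitmxE unitfE Hev.
  by rewrite /root; apply: contra => /eqP ->.
have := sgp_pinftyP nr (_ : 1 \in `[1, +oo[).
rewrite /sgp_pinfty lr1 sgr1 in_itv /= lexx => /(_ isT) /eqP.
rewrite sgr_cp0 => hr.
by rewrite -(rmorph1 (real_complex R)) Hev.
Qed.
End D.


Section W.
Variable R : realType.
Local Notation C := (R[i]).
Variables (p q : nat) (X : 'M[C]_(p, q)) (Sg : 'M[C]_q).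
Let A := invmx (ctr X *m X + invmx Sg).
Hypothesis Su : Sg \in unitmx.
Hypothesis Mu : (ctr X *m X + invmx Sg) \in unitmx.

Lemma wood : (X *m Sg *m ctr X + 1%:M) *m (1%:M - X *m A *m ctr X) = 1%:M.
Proof.
have GA : ctr X *m X *m A = 1%:M - invmx Sg *m A.
  by rewrite -(mulmxV Mu) -/A mulmxDl addrK.
have SGA : Sg *m (ctr X *m X *m A) = Sg - A.
  by rewrite GA mulmxBr mulmx1 mulmxA mulmxV // mul1mx.
have e : X *m Sg *m ctr X *m (X *m A *m ctr X)
       = X *m Sg *m ctr X - X *m A *m ctr X.
  rewrite -mulmxBl -mulmxBr -SGA !mulmxA //.
rewrite mulmxDl mul1mx mulmxBr mulmx1 e.
by rewrite opprB [X *m Sg *m ctr X + _]addrCA subrr addr0 addrC subrK.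
Qed.

Lemma woodinv : invmx (X *m Sg *m ctr X + 1%:M) = 1%:M - X *m A *m ctr X.
Proof.
have [Ku _] := mulmx1_unit wood.
set K := X *m Sg *m ctr X + 1%:M.
transitivity (invmx K *m (K *m (1%:M - X *m A *m ctr X))).
  by rewrite wood mulmx1.
by rewrite mulmxA mulVmx // mul1mx.
Qed.

End W.
Section Q.
Variable R : realType.
Local Notation C := (R[i]).
Implicit Types (p q : nat).

Lemma qBl p q (a c : 'cV[C]_p) (M : 'M[C]_(p, q)) (b : 'cV[C]_q) :
  ctr (a - c) *m M *m b = ctr a *m M *m b - ctr c *m M *m b.
Proof. by rewrite ctrB !mulmxBl. Qed.
Lemma qBr p q (a : 'cV[C]_p) (M : 'M[C]_(p, q)) (b d : 'cV[C]_q) :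
  ctr a *m M *m (b - d) = ctr a *m M *m b - ctr a *m M *m d.
Proof. by rewrite mulmxBr. Qed.
Lemma qBm p q (a : 'cV[C]_p) (M N : 'M[C]_(p, q)) (b : 'cV[C]_q) :
  ctr a *m (M - N) *m b = ctr a *m M *m b - ctr a *m N *m b.
Proof. by rewrite mulmxBr mulmxBl. Qed.
Lemma qXl p q r (X : 'M[C]_(p, r)) (a : 'cV[C]_r) (M : 'M[C]_(p, q)) (b : 'cV[C]_q) :
  ctr (X *m a) *m M *m b = ctr a *m (ctr X *m M) *m b.
Proof. by rewrite ctrM !mulmxA. Qed.
Lemma qXr p q r (X : 'M[C]_(q, r)) (a : 'cV[C]_p) (M : 'M[C]_(p, q)) (b : 'cV[C]_r) :
  ctr a *m M *m (X *m b) = ctr a *m (M *m X) *m b.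
Proof. by rewrite !mulmxA. Qed.
Lemma q1 p (a b : 'cV[C]_p) : ctr a *m 1%:M *m b = ctr a *m b.
Proof. by rewrite mulmx1. Qed.

Lemma zm8 (a1 a2 a3 a4 a5 a6 a7 a8 : 'M[C]_1) :
  (a1 - a2 - (a3 - a4) - (a5 - a6 - (a7 - a8))) 0 0
  = a1 0 0 - a2 0 0 - (a3 - a4) 0 0 - (a5 - a6) 0 0 + (a7 - a8) 0 0.
Proof. rewrite !mxE. ring. Qed.

Lemma quad_expand0 p q (X : 'M[C]_(p, q)) (A : 'M[C]_q)
  (y : 'cV[C]_p) (mu : 'cV[C]_q) : ctr A = A ->
  (ctr (y - X *m mu) *m (1%:M - X *m A *m ctr X) *m (y - X *m mu)) 0 0
  = (ctr y *m y) 0 0 - (ctr (ctr X *m y) *m A *m (ctr X *m y)) 0 0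
    - (ctr (ctr X *m y) *m ((1%:M - A *m (ctr X *m X)) *m mu)) 0 0
    - (ctr ((1%:M - A *m (ctr X *m X)) *m mu) *m (ctr X *m y)) 0 0
    + (ctr mu *m (ctr X *m X - ctr X *m X *m A *m (ctr X *m X)) *m mu) 0 0.
Proof.
move=> hA.
rewrite qBl !qBr !qBm !qXl !qXr.
have h1 : ctr y *m 1%:M *m y = ctr y *m y by rewrite mulmx1.
have h3 : ctr (ctr X *m y) *m ((1%:M - A *m (ctr X *m X)) *m mu)
   = ctr y *m (1%:M *m X) *m mu - ctr y *m (X *m A *m ctr X *m X) *m mu.
  by rewrite ctrM ctrK (mulmxBl 1%:M (A *m (ctr X *m X)) mu) mulmxBr mul1mx !mulmxA mulmx1.
have h4 : ctr ((1%:M - A *m (ctr X *m X)) *m mu) *m (ctr X *m y)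
   = ctr mu *m (ctr X *m 1%:M) *m y - ctr mu *m (ctr X *m (X *m A *m ctr X)) *m y.
  rewrite ctrM ctrB ctr1 ctrM ctrM ctrK hA.
  rewrite (mulmxBr (ctr mu) 1%:M (ctr X *m X *m A)).
  rewrite (mulmxBl (ctr mu *m 1%:M) (ctr mu *m (ctr X *m X *m A)) (ctr X *m y)).
  rewrite !mulmx1.
  (congr (_ - _); rewrite !mulmxA //).
have h5 : ctr mu *m (ctr X *m X) *m mu = ctr mu *m (ctr X *m 1%:M *m X) *m mu.
  by rewrite mulmx1.
have h6 : ctr mu *m (ctr X *m X *m A *m (ctr X *m X)) *m mu
   = ctr mu *m (ctr X *m (X *m A *m ctr X) *m X) *m mu.
  by rewrite !mulmxA.
  rewrite h1.
  rewrite ctrK.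
  rewrite h3 h4 h5 h6.
exact: zm8.
Qed.
End Q.



Unset Implicit Arguments.

Lemma argmax_exp (R : realType) (F G : R -> R) (k c : R) : 0 < k ->
  (forall x, F x = k * expR (G x + c)) -> argmax F = argmax G.
Proof.
move=> k0 HF; apply/seteqP; split => x /= H x'; have := H x'.
  by rewrite !HF ler_pM2l // ler_expR lerD2r.
by rewrite !HF ler_pM2l // ler_expR lerD2r.
Qed.
Theorem theorem1 (R : realType) (lt lr n : nat)
  (S : 'M[R[i]]_(n, lt)) (Sigma : 'M[R[i]]_(lr * lt)) (mu : 'cV[R[i]]_(lr * lt))
  (muf sigf : R) :
  (0 < lt)%N -> (0 < lr)%N -> (0 < n)%N ->
  herm_pd Sigma -> 0 < sigf ->
  [/\ (* A and b do not depend on f_delta *)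
      (forall f : R,
         (1%:M - Amx lr S Sigma *m ctr (Xgr lr S f) *m Xgr lr S f) *m mu
         = bvec lr S Sigma mu),
      (* special form of A for orthogonal pilots *)
      (ctr S *m S = (n%:R * rho S / lt%:R)%:M ->
         Amx lr S Sigma = invmx (invmx Sigma + (n%:R * rho S / lt%:R)%:M)),
      (* MAP estimator *)
      (forall y : 'cV[R[i]]_(lr * n),
         argmax (fun f => lik lr S Sigma mu f y * normal_pdf muf sigf f)
         = argmax (gfun lr S Sigma mu muf (sigf ^- 2) y))
    & (* ML estimator *)
      (forall y : 'cV[R[i]]_(lr * n),
         argmax (fun f => lik lr S Sigma mu f y)
         = argmax (gfun lr S Sigma mu muf 0 y))].
Proof.
move=> hlt hlr hn [hSh hSpd] hsig.
have Su : Sigma \in unitmx := pd_unit hSpd.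
set G := ctr (Sgr lr S) *m Sgr lr S.
have hG f : ctr (Xgr lr S f) *m Xgr lr S f = G by exact: XtX.
have Mpd : pdQ (G + invmx Sigma).
  rewrite addrC; apply: pdD; first exact: pd_inv.
  by move=> u; exact: psd_gram.
have Mu := pd_unit Mpd.
have eA : invmx (G + invmx Sigma) = Amx lr S Sigma by [].
have hA : ctr (Amx lr S Sigma) = Amx lr S Sigma.
  by rewrite /Amx ctr_inv ctrD ctrM ctrK ctr_inv hSh.
have eb : bvec lr S Sigma mu = (1%:M - Amx lr S Sigma *m G) *m mu.
  by rewrite /bvec mulmxA.
pose D := pi ^+ (lr * n) *
  complex.Re (\det (Sgr lr S *m Sigma *m ctr (Sgr lr S) + 1%:M)).
have D0 : 0 < D.
  apply: mulr_gt0; first by rewrite exprn_gt0 // pi_gt0.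
  rewrite addrC; apply: det_pos.
    by rewrite !ctrM ctrK hSh !mulmxA.
  move=> t t0; apply: pd_unit => u un0.
  rewrite mulmxDr mulmxDl e00D ReD.
  have h2 := psd_conj (Sgr lr S) u hSpd.
  have h1 : 0 < complex.Re ((ctr u *m (t%:C)%:M *m u) 0 0).
    rewrite mul_mx_scalar -scalemxAl mxE Re_real.
    exact: mulr_gt0 t0 (Re_gt0 (normsq_gt0 un0)).
  lra.
pose C0 (y : 'cV[R[i]]_(lr * n)) := - complex.Re ((ctr y *m y) 0 0)
  - complex.Re ((ctr mu *m (G - G *m Amx lr S Sigma *m G) *m mu) 0 0).
have Hlik y f : lik lr S Sigma mu f y
    = D^-1 * expR (gfun lr S Sigma mu muf 0 y f + C0 y).
  rewrite /lik /cn_pdf detK -/D mulrC; congr (_ * expR _).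
  have Mu' : ctr (Xgr lr S f) *m Xgr lr S f + invmx Sigma \in unitmx by rewrite hG.
  rewrite (woodinv Su Mu') hG eA quad_expand0 // hG.
  rewrite /gfun eb.
  set v := ctr (Xgr lr S f) *m y.
  set b := (1%:M - Amx lr S Sigma *m G) *m mu.
  have cj : (ctr v *m b) 0 0 = ((ctr b *m v) 0 0)^*.
    by rewrite -ctr11 ctrM ctrK.
  rewrite cj /C0 !(ReD, ReB, ReN, ReJ).
  ring.
have sig0 : sigf != 0 by rewrite gt_eqF.
split.
- move=> f; rewrite /bvec -(mulmxA (Amx lr S Sigma) (ctr (Xgr lr S f))) hG.
  rewrite -(mulmxA (Amx lr S Sigma) (ctr (Sgr lr S))).
  exact: erefl.
- move=> hSS; rewrite /Amx.
  have -> : ctr (Sgr lr S) *m Sgr lr S = (n%:R * rho S / lt%:R)%:M.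
    by rewrite /Sgr ctr_tens ctr1 tensmx_mul mulmx1 hSS tens_scal.
  by rewrite addrC.
- move=> y; apply: (@argmax_exp _ _ _ (D^-1 * normal_peak sigf) (C0 y)).
    by apply: mulr_gt0; [rewrite invr_gt0 | exact: normal_peak_gt0].
  move=> x; rewrite Hlik /normal_pdf (negbTE sig0) /normal_fun.
  have -> : gfun lr S Sigma mu muf (sigf ^- 2) y x + C0 y
    = (gfun lr S Sigma mu muf 0 y x + C0 y) + (- (x - muf) ^+ 2 / (sigf ^+ 2 *+ 2)).
    rewrite /gfun real_normK ?num_real // -mulr_natr.
    field.
    exact: sig0.
  by rewrite [in RHS]expRD mulrACA.
- move=> y; apply: (@argmax_exp _ _ _ D^-1 (C0 y)); first by rewrite invr_gt0.
  exact: Hlik.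
Qed.
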